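(* Assume A2, let $x\in\mathcal I$ and suppose the $x$-threshold word $\pi$ exists. Then $\pi$ is a valid word.
   Context: Words are finite strings over $\{0,1\}$; $w^\omega$ is the infinite repetition of $w$. Let $\mathcal I\subseteq\mathbb R$ be an interval and $\phi_0,\phi_1:\mathcal I\to\mathcal I$. For a word $w$ put $\phi_w:=\phi_{w_{|w|}}\circ\cdots\circ\phi_{w_1}$ (first letter applied first), $\phi_\epsilon=\mathrm{id}$. Assumption A2: for all $x<y$ in $\mathcal I$ and $k\in\{0,1\}$, $\phi_k(x)<\phi_k(y)$ and $\phi_k(y)-\phi_k(x)<y-x$; moreover $\phi_0,\phi_1$ have fixed points $y_0,y_1\in\mathcal I$ with $y_1<y_0$. The $x$-threshold orbit is the sequence $(x_k)_{k\ge1}$ with $x_1=\phi_1(x)$ and $x_{k+1}=\phi_1(x_k)$ if $x_k\ge x$, $x_{k+1}=\phi_0(x_k)$ if $x_k<x$. The $x$-threshold word is the shortest non-empty finite word $\pi$ such that $x_{k+1}=\phi_{(\pi^\omega)_k}(x_k)$ for all $k\ge1$, when such a word exists. For $p\ge1$, $L_p$ and $R_p$ are the word morphisms determined by $L_p(0)=0^{p+1}1$, $L_p(1)=0^p1$, $R_p(0)=01^p$, $R_p(1)=01^{p+1}$. The set of valid words is the smallest set of words containing $0$ and $1$ and closed under $L_p$ and $R_p$ for all $p\ge1$ (these are exactly the Christoffel words). *)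

(* Defs.v *)
From Stdlib Require Import Reals Lra List.
Import ListNotations.
Open Scope R_scope.

(* Words over {0,1}: false = letter 0, true = letter 1. *)
Definition word := list bool.

Definition phik (phi0 phi1 : R -> R) (k : bool) : R -> R :=
  if k then phi1 else phi0.

(* phi_w := phi_{w_|w|} o ... o phi_{w_1} (first letter applied first) *)
Definition phiw (phi0 phi1 : R -> R) (w : word) (y : R) : R :=
  fold_left (fun acc k => phik phi0 phi1 k acc) w y.

Definition is_interval (I : R -> Prop) : Prop :=
  forall a b c, I a -> I c -> a <= b -> b <= c -> I b.

Definition A2 (I : R -> Prop) (phi0 phi1 : R -> R) : Prop :=
  (forall k y, I y -> I (phik phi0 phi1 k y)) /\
  (forall k y z, I y -> I z -> y < z ->
      phik phi0 phi1 k y < phik phi0 phi1 k z /\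
      phik phi0 phi1 k z - phik phi0 phi1 k y < z - y) /\
  (exists y0 y1, I y0 /\ I y1 /\ phi0 y0 = y0 /\ phi1 y1 = y1 /\ y1 < y0).

(* x-threshold orbit, 0-indexed: orbit n = x_{n+1}. *)
Fixpoint orbit (phi0 phi1 : R -> R) (x : R) (n : nat) : R :=
  match n with
  | O => phi1 x
  | S m => let xm := orbit phi0 phi1 x m in
           if Rle_dec x xm then phi1 xm else phi0 xm
  end.

(* (w^omega)_k with 1-indexed k, written here 0-indexed:
   letter n (0-indexed) of w^omega is nth (n mod |w|) w. *)
Definition omega_letter (w : word) (n : nat) : bool :=
  nth (Nat.modulo n (length w)) w false.

Definition generates_orbit (phi0 phi1 : R -> R) (x : R) (pi : word) : Prop :=
  pi <> @nil bool /\
  forall n : nat,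
    orbit phi0 phi1 x (S n) = phik phi0 phi1 (omega_letter pi n) (orbit phi0 phi1 x n).

Definition threshold_word (phi0 phi1 : R -> R) (x : R) (pi : word) : Prop :=
  generates_orbit phi0 phi1 x pi /\
  forall pi', generates_orbit phi0 phi1 x pi' -> (length pi <= length pi')%nat.

Definition Lmorph (p : nat) (w : word) : word :=
  flat_map (fun b : bool => if b then List.repeat false p ++ [true]
                     else List.repeat false (S p) ++ [true]) w.
Definition Rmorph (p : nat) (w : word) : word :=
  flat_map (fun b : bool => if b then false :: List.repeat true (S p)
                     else false :: List.repeat true p) w.

Inductive valid : word -> Prop :=
  | valid0 : valid [false]
  | valid1 : valid [true]
  | validL : forall p w, (1 <= p)%nat -> valid w -> valid (Lmorph p w)
  | validR : forall p w, (1 <= p)%nat -> valid w -> valid (Rmorph p w).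

(* Main.v *)
Require Import Defs.
From Stdlib Require Import Reals Lra Lia List Classical.
Import ListNotations.
Open Scope R_scope.

Definition genc (pi : list bool) (c : nat -> bool) : Prop :=
  pi <> nil /\ forall n, c n = omega_letter pi n.
Definition mingen pi c := genc pi c /\ forall pi', genc pi' c -> (length pi <= length pi')%nat.

Lemma genc_len pi c : genc pi c -> (0 < length pi)%nat.
Proof. intros [H _]. destruct pi; simpl; [congruence| lia]. Qed.

Lemma genc_per pi c : genc pi c -> forall n, c (n + length pi)%nat = c n.
Proof.
  intros H n. pose proof (genc_len _ _ H) as Hl. destruct H as [_ H].
  rewrite !H. unfold omega_letter.
  replace (n + length pi)%nat with (n + 1 * length pi)%nat by lia.
  now rewrite Nat.Div0.mod_add.
Qed.

Lemma genc_pre pi c : genc pi c -> forall n, (n < length pi)%nat -> c n = nth n pi false.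
Proof.
  intros [_ H] n Hn. rewrite H. unfold omega_letter. now rewrite Nat.mod_small.
Qed.

Lemma per_mod (c : nat -> bool) N : (0 < N)%nat -> (forall n, c (n+N)%nat = c n) ->
  forall n, c n = c (n mod N).
Proof.
  intros HN Hp.
  assert (Hk : forall k r, c (r + k * N)%nat = c r).
  { induction k; intros r. now rewrite Nat.add_0_r.
    replace (r + S k * N)%nat with ((r + k * N) + N)%nat by lia. now rewrite Hp. }
  intros n. rewrite (Nat.div_mod_eq n N) at 1.
  replace (N * (n / N) + n mod N)%nat with (n mod N + (n / N) * N)%nat by lia.
  apply Hk.
Qed.

Lemma per_gen (c : nat -> bool) N w : (0 < N)%nat -> length w = N ->
  (forall n, c (n+N)%nat = c n) -> (forall n, (n < N)%nat -> c n = nth n w false) -> genc w c.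
Proof.
  intros HN Hl Hp Hpre. split.
  - intro E; subst; simpl in *; lia.
  - intros n. unfold omega_letter. rewrite Hl. rewrite (per_mod c N HN Hp n).
    apply Hpre. apply Nat.mod_upper_bound. lia.
Qed.

Lemma mingen_exists c w : genc w c -> exists pi, mingen pi c.
Proof.
  assert (forall n w, (length w <= n)%nat -> genc w c -> exists pi, mingen pi c).
  { induction n; intros w0 Hl Hg.
    - pose proof (genc_len _ _ Hg). lia.
    - destruct (classic (forall pi', genc pi' c -> (length w0 <= length pi')%nat)) as [Hm|Hm].
      + exists w0. split; auto.
      + apply not_all_ex_not in Hm. destruct Hm as [w1 Hw1].
        apply IHn with w1.
        * destruct (classic (genc w1 c)) as [G|G]; [|exfalso; apply Hw1; intro; contradiction].
          assert (~ (length w0 <= length w1)%nat) by (intro; apply Hw1; auto). lia.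
        * destruct (classic (genc w1 c)) as [G|G]; auto. exfalso; apply Hw1; intro; contradiction. }
  intros Hg. eapply H; eauto.
Qed.

Lemma mingen_eq c p1 p2 : mingen p1 c -> mingen p2 c -> p1 = p2.
Proof.
  intros [G1 M1] [G2 M2].
  assert (E : length p1 = length p2) by (specialize (M1 _ G2); specialize (M2 _ G1); lia).
  apply nth_ext with false false; auto.
  intros n Hn. rewrite <- (genc_pre _ _ G1 n Hn). apply genc_pre; auto. lia.
Qed.

Lemma mkword_gen (c : nat -> bool) m : (0 < m)%nat -> (forall n, c (n+m)%nat = c n) ->
  genc (map c (seq 0 m)) c.
Proof.
  intros Hm Hp. apply per_gen with m; auto.
  - now rewrite length_map, length_seq.
  - intros n Hn. rewrite nth_indep with (d' := c 0%nat) by (rewrite length_map, length_seq; lia).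
    rewrite map_nth. rewrite seq_nth; [reflexivity| lia].
Qed.

Fixpoint bpos (blk : bool -> list bool) (c' : nat -> bool) (j : nat) : nat :=
  match j with O => O | S k => (bpos blk c' k + length (blk (c' k)))%nat end.

Lemma bpos_le blk c' : (forall b, 2 <= length (blk b))%nat ->
  forall j k, (j <= k)%nat -> (bpos blk c' j + 2 * (k - j) <= bpos blk c' k)%nat.
Proof.
  intros Hb j k Hjk. induction Hjk. rewrite Nat.sub_diag; lia.
  change (bpos blk c' (S m)) with (bpos blk c' m + length (blk (c' m)))%nat. specialize (Hb (c' m)). lia.
Qed.

Lemma bpos_dec blk c' : (forall b, 2 <= length (blk b))%nat ->
  forall n, exists j i, (i < length (blk (c' j)))%nat /\ n = (bpos blk c' j + i)%nat.
Proof.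
  intros Hb n. induction n.
  - exists 0%nat, 0%nat. split; [specialize (Hb (c' 0%nat)); lia| reflexivity].
  - destruct IHn as [j [i [Hi E]]].
    destruct (Nat.lt_ge_cases (S i) (length (blk (c' j)))).
    + exists j, (S i). split; auto; lia.
    + exists (S j), 0%nat. split; [specialize (Hb (c' (S j))); lia|]. simpl. lia.
Qed.

Lemma bpos_shift_per blk c' M : (forall j, c' (j + M)%nat = c' j) ->
  forall j, bpos blk c' (j + M) = (bpos blk c' j + bpos blk c' M)%nat.
Proof.
  intros Hp j. induction j. reflexivity.
  simpl. rewrite IHj, Hp. lia.
Qed.

Lemma bpos_S blk c' j : bpos blk c' (S j) = (length (blk (c' 0%nat)) + bpos blk (fun k => c' (S k)) j)%nat.
Proof. induction j. simpl. lia. simpl in *. rewrite IHj. lia. Qed.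

Lemma bpos_flat blk : forall w c', (forall k, (k < length w)%nat -> c' k = nth k w false) ->
  bpos blk c' (length w) = length (flat_map blk w) /\
  forall j i, (j < length w)%nat -> (i < length (blk (c' j)))%nat ->
    nth (bpos blk c' j + i) (flat_map blk w) false = nth i (blk (c' j)) false.
Proof.
  induction w as [|a w IH]; intros c' Hc.
  - split; [reflexivity| simpl; intros; lia].
  - assert (H0 : c' 0%nat = a) by (apply (Hc 0%nat); simpl; lia).
    destruct (IH (fun k => c' (S k))) as [IH1 IH2].
    { intros k Hk. apply (Hc (S k)). simpl; lia. }
    split.
    + simpl length. rewrite bpos_S, IH1. simpl. rewrite length_app, H0. reflexivity.
    + intros j i Hj Hi. simpl flat_map. destruct j.
      * simpl. rewrite app_nth1 by (rewrite <- H0; exact Hi). now rewrite H0.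
      * rewrite bpos_S, H0. rewrite app_nth2 by lia.
        replace (length (blk a) + bpos blk (fun k => c' (S k)) j + i - length (blk a))%nat
          with (bpos blk (fun k => c' (S k)) j + i)%nat by lia.
        apply IH2; auto. simpl in Hj; lia.
Qed.

Lemma comb_boundary blk (c c' : nat -> bool) N :
  (forall b, 2 <= length (blk b))%nat ->
  (forall N m i, (0 < N)%nat -> (forall n, c (n+N)%nat = c n) -> (0 < i)%nat ->
      (i < length (blk (c' m)))%nat -> N = (bpos blk c' m + i)%nat -> False) ->
  (0 < N)%nat -> (forall n, c (n+N)%nat = c n) ->
  exists m, (0 < m)%nat /\ bpos blk c' m = N.
Proof.
  intros Hb Hbd HN Hp. destruct (bpos_dec blk c' Hb N) as [m [i [Hi E]]].
  destruct i.
  - exists m. split; [|lia]. destruct m; simpl in E; lia.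
  - exfalso. apply (Hbd N m (S i)); auto; lia.
Qed.

Lemma comb_period blk (c c' : nat -> bool) d N m :
  (forall j i, (i < length (blk (c' j)))%nat -> c (bpos blk c' j + i)%nat = nth i (blk (c' j)) false) ->
  (forall j, c (bpos blk c' j + d)%nat = c' j) ->
  (forall n, c (n+N)%nat = c n) -> bpos blk c' m = N ->
  forall j, c' (j + m)%nat = c' j.
Proof.
  intros Hc Hd Hp Hm.
  assert (Hq : forall j, bpos blk c' (j + m) = (bpos blk c' j + N)%nat /\ c' (j+m)%nat = c' j).
  { induction j.
    - simpl. split; auto. rewrite <- (Hd m), <- (Hd 0%nat). rewrite Hm. simpl.
      rewrite Nat.add_comm. apply Hp.
    - destruct IHj as [E1 E2].
      assert (E3 : c' (S j + m)%nat = c' (S j)).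
      { rewrite <- (Hd (S j + m)%nat), <- (Hd (S j)).
        simpl (S j + m)%nat. simpl bpos. rewrite E1, E2.
        replace (bpos blk c' j + N + length (blk (c' j)) + d)%nat
          with (bpos blk c' j + length (blk (c' j)) + d + N)%nat by lia. apply Hp. }
      split; auto. simpl (S j + m)%nat. simpl bpos. rewrite E1, E2. lia. }
  intro j. apply Hq.
Qed.

Lemma comb_period2 blk (c c' : nat -> bool) M :
  (forall j i, (i < length (blk (c' j)))%nat -> c (bpos blk c' j + i)%nat = nth i (blk (c' j)) false) ->
  (forall b, 2 <= length (blk b))%nat ->
  (forall j, c' (j + M)%nat = c' j) -> forall n, c (n + bpos blk c' M)%nat = c n.
Proof.
  intros Hc Hb Hp n. destruct (bpos_dec blk c' Hb n) as [j [i [Hi E]]]. subst n.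
  replace (bpos blk c' j + i + bpos blk c' M)%nat with (bpos blk c' (j + M) + i)%nat
    by (rewrite bpos_shift_per; auto; lia).
  rewrite !Hc; rewrite ?Hp; auto.
Qed.

Lemma comb blk (c c' : nat -> bool) pi :
  (forall b, 2 <= length (blk b))%nat ->
  (forall j i, (i < length (blk (c' j)))%nat -> c (bpos blk c' j + i)%nat = nth i (blk (c' j)) false) ->
  (exists d, forall j, c (bpos blk c' j + d)%nat = c' j) ->
  (forall N m i, (0 < N)%nat -> (forall n, c (n+N)%nat = c n) -> (0 < i)%nat ->
      (i < length (blk (c' m)))%nat -> N = (bpos blk c' m + i)%nat -> False) ->
  mingen pi c -> exists pi', mingen pi' c' /\ (length pi' < length pi)%nat /\ pi = flat_map blk pi'.
Proof.
  intros Hb Hc [d Hd] Hbd [Gp Mp].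
  assert (Key : forall w, genc w c -> exists m, (0 < m)%nat /\ bpos blk c' m = length w /\
                 genc (map c' (seq 0 m)) c').
  { intros w Gw. destruct (comb_boundary blk c c' (length w) Hb Hbd (genc_len _ _ Gw) (genc_per _ _ Gw))
      as [m [Hm E]]. exists m. split; auto. split; auto.
    apply mkword_gen; auto. exact (comb_period blk c c' d (length w) m Hc Hd (genc_per _ _ Gw) E). }
  destruct (Key pi Gp) as [m [Hm [Em Gm]]].
  destruct (mingen_exists _ _ Gm) as [pi' [Gp' Mp']].
  pose proof (Mp' _ Gm) as Hlm. rewrite length_map, length_seq in Hlm.
  pose proof (genc_len _ _ Gp') as HM.
  destruct (bpos_flat blk pi' c' (genc_pre _ _ Gp')) as [F1 F2].
  set (w := flat_map blk pi') in *.
  assert (Gw : genc w c).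
  { apply per_gen with (length w); auto.
    - rewrite <- F1. pose proof (bpos_le blk c' Hb 0 (length pi')). simpl in H. lia.
    - rewrite <- F1. apply comb_period2; auto. apply genc_per; auto.
    - intros n Hn. destruct (bpos_dec blk c' Hb n) as [j [i [Hi E]]]. subst n.
      assert (Hj : (j < length pi')%nat).
      { destruct (Nat.lt_ge_cases j (length pi')); auto.
        pose proof (bpos_le blk c' Hb _ _ H). lia. }
      rewrite Hc by auto. symmetry. apply F2; auto. }
  assert (Mw : mingen w c).
  { split; auto. intros w2 G2. destruct (Key w2 G2) as [m2 [Hm2 [E2 G2']]].
    pose proof (Mp' _ G2') as HH. rewrite length_map, length_seq in HH.
    pose proof (bpos_le blk c' Hb _ _ HH). lia. }
  exists pi'. split; [split; auto|]. split.
  - pose proof (bpos_le blk c' Hb 0 m (Nat.le_0_l _)). simpl in H. lia.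
  - apply (mingen_eq c); auto. split; auto.
Qed.

Definition blkL (p : nat) (b : bool) : list bool :=
  if b then List.repeat false p ++ [true] else List.repeat false (S p) ++ [true].
Definition blkR (p : nat) (b : bool) : list bool :=
  if b then false :: List.repeat true (S p) else false :: List.repeat true p.

Lemma Lmorph_eq p w : Lmorph p w = flat_map (blkL p) w.
Proof. reflexivity. Qed.
Lemma Rmorph_eq p w : Rmorph p w = flat_map (blkR p) w.
Proof. reflexivity. Qed.

Lemma nth_rep_lt n j : (j < n)%nat -> nth j (List.repeat false n ++ [true]) false = false.
Proof. intros H. rewrite app_nth1 by (rewrite repeat_length; lia). apply nth_repeat. Qed.
Lemma nth_rep_eq n : nth n (List.repeat false n ++ [true]) false = true.
Proof. rewrite app_nth2 by (rewrite repeat_length; lia). rewrite repeat_length, Nat.sub_diag. reflexivity. Qed.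

Lemma blkL_len p b : length (blkL p b) = (if b then S p else S (S p)).
Proof. destruct b; simpl; rewrite length_app, repeat_length; simpl; lia. Qed.
Lemma blkR_len p b : length (blkR p b) = (if b then S (S p) else S p).
Proof. destruct b; simpl; rewrite repeat_length; lia. Qed.

Lemma L_dec p (c c' : nat -> bool) :
  (forall j i, (i < length (blkL p (c' j)))%nat -> c (bpos (blkL p) c' j + i)%nat = nth i (blkL p (c' j)) false) ->
  forall j, c (bpos (blkL p) c' j + p)%nat = c' j.
Proof.
  intros Hc j. rewrite Hc by (rewrite blkL_len; destruct (c' j); lia).
  unfold blkL. destruct (c' j).
  - apply nth_rep_eq.
  - apply nth_rep_lt; lia.
Qed.

Lemma L_bound p (c c' : nat -> bool) :
  (forall j i, (i < length (blkL p (c' j)))%nat -> c (bpos (blkL p) c' j + i)%nat = nth i (blkL p (c' j)) false) ->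
  (c' 0%nat = false \/ forall j, c' j = true) ->
  (forall N m i, (0 < N)%nat -> (forall n, c (n+N)%nat = c n) -> (0 < i)%nat ->
      (i < length (blkL p (c' m)))%nat -> N = (bpos (blkL p) c' m + i)%nat -> False).
Proof.
  intros Hc H0 N m i HN Hp Hi Hil E.
  set (k := (length (blkL p (c' m)) - 1)%nat).
  assert (E1 : c (bpos (blkL p) c' m + k)%nat = true).
  { rewrite Hc by (unfold k; lia). unfold k. rewrite blkL_len. unfold blkL.
    destruct (c' m).
    - replace (S p - 1)%nat with p by lia. apply nth_rep_eq.
    - replace (S (S p) - 1)%nat with (S p) by lia. apply nth_rep_eq. }
  assert (Hk : (k - i < length (blkL p (c' 0%nat)) - 1)%nat).
  { unfold k. rewrite !blkL_len in *. destruct H0 as [H0|H0].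
    - rewrite H0. destruct (c' m); lia.
    - rewrite !H0 in *. lia. }
  replace (bpos (blkL p) c' m + k)%nat with ((k - i) + N)%nat in E1 by (unfold k in *; lia).
  rewrite Hp in E1.
  replace (k - i)%nat with (bpos (blkL p) c' 0 + (k - i))%nat in E1 by reflexivity.
  rewrite Hc in E1 by lia. rewrite blkL_len in Hk. revert E1 Hk. unfold blkL.
  destruct (c' 0%nat); intros E1 Hk; rewrite nth_rep_lt in E1 by lia; discriminate.
Qed.

Lemma R_dec p (c c' : nat -> bool) :
  (forall j i, (i < length (blkR p (c' j)))%nat -> c (bpos (blkR p) c' j + i)%nat = nth i (blkR p (c' j)) false) ->
  forall j, c (bpos (blkR p) c' j + S p)%nat = c' j.
Proof.
  intros Hc j. destruct (c' j) eqn:E.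
  - rewrite Hc by (rewrite blkR_len, E; lia). rewrite E. unfold blkR.
    change (nth (S p) (false :: List.repeat true (S p)) false) with (nth p (List.repeat true (S p)) false).
    apply nth_repeat_lt; lia.
  - replace (bpos (blkR p) c' j + S p)%nat with (bpos (blkR p) c' (S j) + 0)%nat
      by (simpl; rewrite blkR_len, E; lia).
    rewrite Hc by (rewrite blkR_len; destruct (c' (S j)); lia).
    unfold blkR; destruct (c' (S j)); reflexivity.
Qed.

Lemma R_bound p (c c' : nat -> bool) :
  (forall j i, (i < length (blkR p (c' j)))%nat -> c (bpos (blkR p) c' j + i)%nat = nth i (blkR p (c' j)) false) ->
  (forall N m i, (0 < N)%nat -> (forall n, c (n+N)%nat = c n) -> (0 < i)%nat ->
      (i < length (blkR p (c' m)))%nat -> N = (bpos (blkR p) c' m + i)%nat -> False).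
Proof.
  intros Hc N m i HN Hp Hi Hil E.
  assert (E0 : c N = false).
  { replace N with (0 + N)%nat by lia. rewrite Hp.
    replace 0%nat with (bpos (blkR p) c' 0 + 0)%nat at 1 by reflexivity.
    rewrite Hc by (rewrite blkR_len; destruct (c' 0%nat); lia).
    unfold blkR; destruct (c' 0%nat); reflexivity. }
  rewrite E, Hc in E0 by auto. rewrite blkR_len in Hil. revert E0 Hil. unfold blkR.
  destruct (c' m); destruct i; try lia; intros E0 Hil;
  change (nth (S i) (false :: ?l) false) with (nth i l false) in E0; rewrite nth_repeat_lt in E0 by lia; discriminate.
Qed.

Definition cd (t y : R) : bool := if Rle_dec t y then true else false.

Fixpoint orbf (g0 g1 : R -> R) (t z : R) (n : nat) : R :=
  match n with
  | O => z
  | S m => let y := orbf g0 g1 t z m in if Rle_dec t y then g1 y else g0 y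
  end.

Lemma orbf_shift g0 g1 t z a n : orbf g0 g1 t z (a + n) = orbf g0 g1 t (orbf g0 g1 t z a) n.
Proof. induction n. now rewrite Nat.add_0_r. rewrite Nat.add_succ_r. simpl. now rewrite IHn. Qed.

Fixpoint zsq (Ob : R -> nat -> R) (len : R -> nat) (s : R) (j : nat) : R :=
  match j with O => s | S k => let z := zsq Ob len s k in Ob z (len z) end.

Lemma block_gen (Ob : R -> nat -> R) (cod : R -> bool) blk (cpf : R -> bool) (D : R -> Prop) s :
  (forall z a n, Ob z (a + n)%nat = Ob (Ob z a) n) -> (forall z, Ob z 0%nat = z) ->
  D s ->
  (forall z, D z -> (forall i, (i < length (blk (cpf z)))%nat -> cod (Ob z i) = nth i (blk (cpf z)) false)
                    /\ D (Ob z (length (blk (cpf z))))) ->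
  let zs := zsq Ob (fun z => length (blk (cpf z))) s in
  let c' := fun j => cpf (zs j) in
  (forall j, Ob s (bpos blk c' j) = zs j /\ D (zs j)) /\
  (forall j i, (i < length (blk (c' j)))%nat -> cod (Ob s (bpos blk c' j + i)%nat) = nth i (blk (c' j)) false).
Proof.
  intros Hsh H0 Ds Hb zs c'.
  assert (H1 : forall j, Ob s (bpos blk c' j) = zs j /\ D (zs j)).
  { induction j.
    - simpl. split; auto.
    - destruct IHj as [E Dj]. simpl. rewrite Hsh, E. split; [reflexivity|].
      apply Hb; auto. }
  split; auto. intros j i Hi. rewrite Hsh. destruct (H1 j) as [E Dj]. rewrite E.
  apply Hb; auto.
Qed.

Lemma clamp_lip a b x y : a <= b ->
  Rabs (Rmax a (Rmin x b) - Rmax a (Rmin y b)) <= Rabs (x - y).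
Proof.
  intros Hab. unfold Rmax, Rmin. repeat destruct Rle_dec; unfold Rabs; repeat destruct Rcase_abs; lra.
Qed.

Lemma ivt_lip (f : R -> R) a b c : a < b ->
  (forall x y, a <= x -> x <= y -> y <= b -> f x <= f y /\ f y - f x <= y - x) ->
  f a < c -> c <= f b -> exists z, a < z <= b /\ f z = c.
Proof.
  intros Hab Hf Ha Hb. destruct (Req_dec (f b) c) as [E|E].
  { exists b. split; auto; lra. }
  set (h := fun x => f (Rmax a (Rmin x b)) - c).
  assert (Hlip : forall x y, Rabs (h x - h y) <= Rabs (x - y)).
  { intros x y. unfold h.
    assert (Ha1 : a <= Rmax a (Rmin x b) <= b) by (split; [apply Rmax_l| apply Rmax_case_strong; intro; try apply Rmin_r; lra]).
    assert (Ha2 : a <= Rmax a (Rmin y b) <= b) by (split; [apply Rmax_l| apply Rmax_case_strong; intro; try apply Rmin_r; lra]).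
    eapply Rle_trans; [| apply (clamp_lip a b x y); lra].
    set (X := Rmax a (Rmin x b)) in *. set (Y := Rmax a (Rmin y b)) in *.
    destruct (Rle_dec X Y) as [L|L].
    - destruct (Hf X Y) as [H1 H2]; try lra.
      rewrite Rabs_left1 by lra. rewrite Rabs_left1 by lra. lra.
    - destruct (Hf Y X) as [H1 H2]; try lra.
      rewrite Rabs_right by lra. rewrite Rabs_right by lra. lra. }
  assert (Hc : continuity h).
  { intros x eps Heps. exists eps. split; auto. intros y [_ Hy]. simpl in *.
    unfold Rdist in *. eapply Rle_lt_trans; [apply Hlip| exact Hy]. }
  assert (ha : h a < 0).
  { unfold h. replace (Rmax a (Rmin a b)) with a. lra.
    rewrite Rmin_left by lra. rewrite Rmax_left; lra. }
  assert (hb : 0 < h b).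
  { unfold h. replace (Rmax a (Rmin b b)) with b. lra.
    rewrite Rmin_left by lra. rewrite Rmax_right; lra. }
  destruct (IVT h a b Hc Hab ha hb) as [z [Hz Ez]].
  exists z. unfold h in Ez.
  rewrite Rmin_left in Ez by lra. rewrite Rmax_right in Ez by lra.
  split; [|lra]. split; [|lra].
  destruct (Req_dec z a); [subst; lra| lra].
Qed.

Lemma least (P : nat -> Prop) : (exists n, P n) -> exists n, P n /\ forall m, (m < n)%nat -> ~ P m.
Proof.
  intros [n Hn]. revert Hn. induction n as [n IH] using (well_founded_induction Wf_nat.lt_wf). intros Hn.
  destruct (classic (exists m, (m < n)%nat /\ P m)) as [[m [Hm Pm]]|HN].
  - apply (IH m Hm Pm).
  - exists n. split; auto. intros m Hm Pm. apply HN. exists m; auto.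
Qed.

Lemma genc_ext pi (c1 c2 : nat -> bool) : (forall n, c1 n = c2 n) -> genc pi c1 -> genc pi c2.
Proof. intros E [H1 H2]. split; auto. intros n. rewrite <- E. auto. Qed.

Lemma mingen_ext pi (c1 c2 : nat -> bool) : (forall n, c1 n = c2 n) -> mingen pi c1 -> mingen pi c2.
Proof.
  intros E [G M]. split. eapply genc_ext; eauto.
  intros pi' G'. apply M. eapply genc_ext; [|exact G']. intro; auto.
Qed.

Lemma valid_len1 pi c b : mingen pi c -> genc [b] c -> valid pi.
Proof.
  intros [G M] G1. specialize (M _ G1). pose proof (genc_len _ _ G).
  destruct pi as [|a [|a' r]]; simpl in *; try lia.
  destruct a; constructor.
Qed.

Lemma const_gen (c : nat -> bool) : (forall j, c j = c 0%nat) -> genc [c 0%nat] c.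
Proof.
  intros H. split; [discriminate|]. intros n. unfold omega_letter. simpl length.
  rewrite Nat.mod_1_r. simpl. apply H.
Qed.

Lemma unbounded (a d : R) : 0 < d -> exists n : nat, a < INR n * d.
Proof.
  intros Hd. destruct (Rlt_dec 0 a) as [Ha|Ha].
  - destruct (archimed_cor1 (d / a)) as [N [HN HN0]].
    { apply Rdiv_lt_0_compat; auto. }
    exists N. assert (0 < INR N) by (apply lt_0_INR; lia).
    apply Rmult_lt_reg_r with (/ INR N); [apply Rinv_0_lt_compat; auto|].
    replace (INR N * d * / INR N) with d by (field; lra).
    apply Rmult_lt_reg_r with (/ a); [apply Rinv_0_lt_compat; auto|].
    replace (a * / INR N * / a) with (/ INR N) by (field; lra).
    unfold Rdiv in HN. lra.
  - exists 1%nat. simpl. lra.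
Qed.

Definition mc (f : R -> R) (a b : R) : Prop :=
  forall y z, a <= y -> y < z -> z <= b -> f y < f z /\ f z - f y < z - y.

Definition sys (g0 g1 : R -> R) (s t u : R) : Prop :=
  s < t /\ t < u /\ mc g0 s t /\ mc g1 t u /\ g0 t = u /\ g1 t = s.


Lemma S1 g0 g1 s t u : sys g0 g1 s t u -> forall y, s <= y <= t -> y + (u - t) <= g0 y /\ g0 y <= u.
Proof.
  intros (Hst & Htu & M0 & M1 & E0 & E1) y Hy.
  destruct (Req_dec y t). subst. lra.
  destruct (M0 y t) as [A B]; lra.
Qed.

Lemma S1s g0 g1 s t u : sys g0 g1 s t u -> forall y, s <= y < t -> g0 y < u.
Proof. intros (Hst & Htu & M0 & M1 & E0 & E1) y Hy. destruct (M0 y t); lra. Qed.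

Lemma S2 g0 g1 s t u : sys g0 g1 s t u -> forall y, t <= y <= u -> s <= g1 y /\ g1 y <= y - (t - s).
Proof.
  intros (Hst & Htu & M0 & M1 & E0 & E1) y Hy.
  destruct (Req_dec y t). subst. lra.
  destruct (M1 t y) as [A B]; lra.
Qed.

Lemma S2s g0 g1 s t u : sys g0 g1 s t u -> forall y, t <= y < u -> g1 y < g1 u.
Proof. intros (Hst & Htu & M0 & M1 & E0 & E1) y Hy. destruct (M1 y u); lra. Qed.

Lemma iterA g0 g1 s t u : sys g0 g1 s t u -> forall k y z, s <= y -> y <= z ->
  (forall j, (j < k)%nat -> Nat.iter j g0 z <= t) ->
  Nat.iter k g0 y <= Nat.iter k g0 z /\ Nat.iter k g0 z - Nat.iter k g0 y <= z - y /\
  s <= Nat.iter k g0 y /\ (y < z -> Nat.iter k g0 y < Nat.iter k g0 z).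
Proof.
  intros Hs. pose proof Hs as (Hst & Htu & M0 & M1 & E0 & E1).
  induction k; intros y z Hy Hyz Hz.
  - simpl. lra.
  - destruct (IHk y z Hy Hyz) as (A & B & C & D).
    { intros j Hj. apply Hz. lia. }
    assert (Hb : Nat.iter k g0 z <= t) by (apply Hz; lia).
    simpl. set (a := Nat.iter k g0 y) in *. set (b := Nat.iter k g0 z) in *.
    destruct (S1 _ _ _ _ _ Hs a) as [F1 F2]; [lra|].
    destruct (Req_dec a b) as [E|E].
    + rewrite E. split; [lra|]. split; [lra|]. split; [rewrite <- E; lra|].
      intros. specialize (D H). lra.
    + destruct (M0 a b) as [G1 G2]; try lra.
Qed.

Lemma iterA_u g0 g1 s t u : sys g0 g1 s t u -> forall k z, s <= z ->
  (forall j, (j <= k)%nat -> Nat.iter j g0 z <= t) -> Nat.iter (S k) g0 z <= u.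
Proof.
  intros Hs k z Hz Hj. simpl.
  destruct (iterA _ _ _ _ _ Hs k z z Hz (Rle_refl _)) as (_ & _ & C & _).
  { intros j H. apply Hj. lia. }
  assert (Nat.iter k g0 z <= t) by (apply Hj; lia).
  destruct (S1 _ _ _ _ _ Hs (Nat.iter k g0 z)); lra.
Qed.

Lemma iterA_us g0 g1 s t u : sys g0 g1 s t u -> forall k z, s <= z ->
  (forall j, (j <= k)%nat -> Nat.iter j g0 z < t) -> Nat.iter (S k) g0 z < u.
Proof.
  intros Hs k z Hz Hj. simpl.
  destruct (iterA _ _ _ _ _ Hs k z z Hz (Rle_refl _)) as (_ & _ & C & _).
  { intros j H. left. apply Hj. lia. }
  assert (Nat.iter k g0 z < t) by (apply Hj; lia).
  apply (S1s _ _ _ _ _ Hs). lra.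
Qed.

Lemma iterB g0 g1 s t u : sys g0 g1 s t u -> forall k y z, y <= z -> z <= u ->
  (forall j, (j < k)%nat -> t <= Nat.iter j g1 y) ->
  Nat.iter k g1 y <= Nat.iter k g1 z /\ Nat.iter k g1 z - Nat.iter k g1 y <= z - y /\
  Nat.iter k g1 z <= u /\ (y < z -> Nat.iter k g1 y < Nat.iter k g1 z).
Proof.
  intros Hs. pose proof Hs as (Hst & Htu & M0 & M1 & E0 & E1).
  induction k; intros y z Hyz Hz Hy.
  - simpl. lra.
  - destruct (IHk y z Hyz Hz) as (A & B & C & D).
    { intros j Hj. apply Hy. lia. }
    assert (Ha : t <= Nat.iter k g1 y) by (apply Hy; lia).
    simpl. set (a := Nat.iter k g1 y) in *. set (b := Nat.iter k g1 z) in *.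
    destruct (S2 _ _ _ _ _ Hs b) as [F1 F2]; [lra|].
    destruct (Req_dec a b) as [E|E].
    + rewrite E. split; [lra|]. split; [lra|]. split; [lra|].
      intros. specialize (D H). lra.
    + destruct (M1 a b) as [G1 G2]; try lra.
Qed.

Lemma iterB_s g0 g1 s t u : sys g0 g1 s t u -> forall k y, y <= u ->
  (forall j, (j <= k)%nat -> t <= Nat.iter j g1 y) -> s <= Nat.iter (S k) g1 y.
Proof.
  intros Hs k y Hy Hj. simpl.
  destruct (iterB _ _ _ _ _ Hs k y y (Rle_refl _) Hy) as (_ & _ & C & _).
  { intros j H. apply Hj. lia. }
  assert (t <= Nat.iter k g1 y) by (apply Hj; lia).
  destruct (S2 _ _ _ _ _ Hs (Nat.iter k g1 y)); lra.
Qed.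

Lemma orb_bound g0 g1 s t u : sys g0 g1 s t u -> forall z, s <= z < u ->
  forall n, s <= orbf g0 g1 t z n < u.
Proof.
  intros Hs z Hz n. pose proof Hs as (Hst & Htu & M0 & M1 & E0 & E1).
  induction n; simpl; auto.
  set (y := orbf g0 g1 t z n) in *. destruct (Rle_dec t y).
  - destruct (S2 _ _ _ _ _ Hs y) as [A B]; lra.
  - destruct (S1 _ _ _ _ _ Hs y) as [A B]; [lra|].
    pose proof (S1s _ _ _ _ _ Hs y). lra.
Qed.

Lemma orb_iterA g0 g1 t z : forall k, (forall j, (j < k)%nat -> Nat.iter j g0 z < t) ->
  orbf g0 g1 t z k = Nat.iter k g0 z.
Proof.
  induction k; intros H; simpl; auto.
  rewrite IHk by (intros; apply H; lia).
  destruct (Rle_dec t (Nat.iter k g0 z)); auto.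
  specialize (H k (Nat.lt_succ_diag_r k)). lra.
Qed.

Lemma orb_iterB g0 g1 t z : z < t -> forall k, (forall j, (j < k)%nat -> t <= Nat.iter j g1 (g0 z)) ->
  orbf g0 g1 t z (S k) = Nat.iter k g1 (g0 z).
Proof.
  intros Hz. induction k; intros H.
  - simpl. destruct (Rle_dec t z); [lra|auto].
  - change (orbf g0 g1 t z (S (S k))) with
      (let y := orbf g0 g1 t z (S k) in if Rle_dec t y then g1 y else g0 y).
    cbv zeta. rewrite IHk by (intros; apply H; lia).
    destruct (Rle_dec t (Nat.iter k g1 (g0 z))); auto.
    specialize (H k (Nat.lt_succ_diag_r k)). lra.
Qed.

Lemma seq_incA g0 g1 s t u : sys g0 g1 s t u -> forall y n, s <= y ->
  (forall m, (m < n)%nat -> Nat.iter m g0 y <= t) -> forall i, (i <= n)%nat -> Nat.iter i g0 y <= Nat.iter n g0 y.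
Proof.
  intros Hs y n Hy. induction n; intros Hm i Hi.
  - replace i with 0%nat by lia. lra.
  - destruct (Nat.eq_dec i (S n)) as [E|E]. subst; lra.
    assert (IH := IHn (fun m H => Hm m ltac:(lia)) i ltac:(lia)).
    destruct (iterA _ _ _ _ _ Hs n y y Hy (Rle_refl _)) as (_ & _ & C & _).
    { intros; apply Hm; lia. }
    assert (Nat.iter n g0 y <= t) by (apply Hm; lia).
    destruct (S1 _ _ _ _ _ Hs (Nat.iter n g0 y)) as [F1 F2]; [lra|].
    pose proof (proj1 (proj2 Hs)). simpl. lra.
Qed.

Lemma hitA g0 g1 s t u : sys g0 g1 s t u -> exists n, t <= Nat.iter n g0 s.
Proof.
  intros Hs. pose proof Hs as (Hst & Htu & M0 & M1 & E0 & E1).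
  destruct (classic (exists n, t <= Nat.iter n g0 s)) as [H|H]; auto. exfalso.
  assert (Hb : forall n, s + INR n * (u - t) <= Nat.iter n g0 s).
  { induction n. simpl. lra.
    assert (Nat.iter n g0 s < t) by (apply Rnot_le_lt; intro; apply H; eauto).
    assert (0 <= INR n) by apply pos_INR.
    destruct (S1 _ _ _ _ _ Hs (Nat.iter n g0 s)) as [F1 F2]. split; [nra|lra].
    rewrite S_INR. simpl. nra. }
  destruct (unbounded (t - s) (u - t)) as [n Hn]; [lra|].
  specialize (Hb n). apply H. exists n. lra.
Qed.

Lemma caseA_facts g0 g1 s t u : sys g0 g1 s t u -> g1 u <= t -> exists p, (1 <= p)%nat /\
  (forall z, s <= z < g1 u -> forall j, (j < p)%nat -> Nat.iter j g0 z < t) /\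
  (Nat.iter p g0 s < t -> forall z, s <= z <= g1 u -> forall j, (j < p)%nat -> Nat.iter j g0 z < t) /\
  (forall z, s <= z <= g1 u -> Nat.iter p g0 z < t -> t <= Nat.iter (S p) g0 z) /\
  (Nat.iter p g0 s < t \/ forall z, s <= z <= g1 u -> t <= Nat.iter p g0 z).
Proof.
  intros Hs Hc. pose proof Hs as (Hst & Htu & M0 & M1 & E0 & E1).
  destruct (least _ (hitA _ _ _ _ _ Hs)) as [q [Hq Hmin]].
  assert (Hlt : forall m, (m < q)%nat -> Nat.iter m g0 s < t).
  { intros m Hm. apply Rnot_le_lt. apply Hmin; auto. }
  assert (Hg1u : g1 u - s < u - t) by (destruct (M1 t u); lra).
  destruct q as [|[|r]].
  - simpl in Hq. lra.
  -
    assert (Hall : forall z, s <= z <= g1 u -> t <= Nat.iter 1 g0 z).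
    { intros z Hz. simpl in *. destruct (Req_dec s z). subst; lra.
      destruct (M0 s z); lra. }
    exists 1%nat. split; [lia|]. split; [|split; [|split]].
    + intros z Hz j Hj. replace j with 0%nat by lia. simpl. lra.
    + intros H. specialize (Hall s). simpl in *. lra.
    + intros z Hz H. specialize (Hall z Hz). lra.
    + right. auto.
  - set (p := S r).
    assert (Key : forall z, s <= z <= g1 u -> forall j, (j <= r)%nat -> Nat.iter j g0 z < t).
    { intros z Hz. induction j as [j IH] using (well_founded_induction Wf_nat.lt_wf).
      intros Hj.
      destruct (iterA _ _ _ _ _ Hs j s z (Rle_refl _) (proj1 Hz)) as (A & B & C & D).
      { intros i Hi. left. apply IH; lia. }
      assert (Ha : Nat.iter j g0 s <= Nat.iter r g0 s).
      { apply (seq_incA _ _ _ _ _ Hs s r (Rle_refl _)); auto.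
        intros m Hm. left. apply Hlt. lia. }
      set (a := Nat.iter r g0 s) in *.
      assert (Hat : a < t) by (apply Hlt; lia).
      assert (Hga : g0 a < t) by (apply (Hlt (S r)); lia).
      destruct (iterA _ _ _ _ _ Hs r s s (Rle_refl _) (Rle_refl _)) as (_ & _ & Cs & _).
      { intros i Hi. left. apply Hlt. lia. }
      destruct (M0 a t) as [G1 G2]; try lra. }
    exists p. split; [unfold p; lia|]. split; [|split; [|split]].
    + intros z Hz j Hj. apply Key; [lra| unfold p in Hj; lia].
    + intros _ z Hz j Hj. apply Key; [lra| unfold p in Hj; lia].
    + intros z Hz Hp.
      destruct (iterA _ _ _ _ _ Hs (S p) s z (Rle_refl _) (proj1 Hz)) as (A & _).
      { intros i Hi. destruct (Nat.eq_dec i p). subst; lra. left. apply Key; auto. unfold p in *; lia. }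
      unfold p in *. lra.
    + left. apply Hlt. unfold p; lia.
Qed.

Lemma caseB_facts g0 g1 s t u : sys g0 g1 s t u -> t < g1 u -> exists p, (1 <= p)%nat /\
  t < g0 s /\
  (forall z, s <= z <= t -> forall j, (j < p)%nat -> t <= Nat.iter j g1 (g0 z)) /\
  (forall z, s <= z < t -> t <= Nat.iter p g1 (g0 z) -> g1 (Nat.iter p g1 (g0 z)) < t) /\
  Nat.iter p g1 (g0 s) < t.
Proof.
  intros Hs Hc. pose proof Hs as (Hst & Htu & M0 & M1 & E0 & E1).
  assert (B0 : t < g0 s).
  { destruct (M1 t u); try lra. destruct (M0 s t); lra. }
  assert (Hmono : forall z, s <= z <= t -> g0 s <= g0 z /\ g0 z - g0 s <= z - s /\ g0 z <= u).
  { intros z Hz. destruct (S1 _ _ _ _ _ Hs z Hz). destruct (Req_dec s z). subst; lra.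
    destruct (M0 s z); lra. }
  assert (Hgs : g0 s <= u) by (destruct (Hmono s); lra).
  assert (Hex : exists n, Nat.iter n g1 (g0 s) < t).
  { destruct (classic (exists n, Nat.iter n g1 (g0 s) < t)) as [H|H]; auto. exfalso.
    assert (Hb : forall n, Nat.iter n g1 (g0 s) <= g0 s - INR n * (t - s)).
    { induction n. simpl. lra.
      assert (t <= Nat.iter n g1 (g0 s)) by (apply Rnot_lt_le; intro; apply H; eauto).
      assert (0 <= INR n) by apply pos_INR.
      destruct (S2 _ _ _ _ _ Hs (Nat.iter n g1 (g0 s))) as [F1 F2]. split; [lra|nra].
      rewrite S_INR. simpl. nra. }
    destruct (unbounded (g0 s - t) (t - s)) as [n Hn]; [lra|].
    specialize (Hb n). apply H. exists n. lra. }
  destruct (least _ Hex) as [q [Hq Hmin]].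
  assert (Hge : forall m, (m < q)%nat -> t <= Nat.iter m g1 (g0 s)).
  { intros m Hm. apply Rnot_lt_le. apply Hmin; auto. }
  destruct q as [|r]. { simpl in Hq. lra. }
  exists (S r). split; [lia|]. split; auto.
  assert (B1 : forall z, s <= z <= t -> forall j, (j < S r)%nat -> t <= Nat.iter j g1 (g0 z)).
  { intros z Hz j Hj. destruct (Hmono z Hz) as (A1 & A2 & A3).
    destruct (iterB _ _ _ _ _ Hs j (g0 s) (g0 z) A1 A3) as (B & _).
    { intros i Hi. apply Hge. lia. }
    specialize (Hge j Hj). lra. }
  split; auto. split; auto.
  intros z Hz HG. destruct (Hmono z) as (A1 & A2 & A3); [lra|].
  destruct (iterB _ _ _ _ _ Hs (S r) (g0 s) (g0 z) A1 A3) as (_ & B & C & _).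
  { intros i Hi. apply Hge. lia. }
  set (Gz := Nat.iter (S r) g1 (g0 z)) in *. set (Gs := Nat.iter (S r) g1 (g0 s)) in *.
  destruct (Req_dec Gz t) as [E|E]. rewrite E; lra.
  destruct (M1 t Gz); lra.
Qed.

Lemma cd_true t y : t <= y -> cd t y = true.
Proof. unfold cd; destruct (Rle_dec t y); auto; lra. Qed.
Lemma cd_false t y : y < t -> cd t y = false.
Proof. unfold cd; destruct (Rle_dec t y); auto; lra. Qed.
Lemma cd_eq_true t y : cd t y = true -> t <= y.
Proof. unfold cd; destruct (Rle_dec t y); auto; discriminate. Qed.
Lemma cd_eq_false t y : cd t y = false -> y < t.
Proof. unfold cd; destruct (Rle_dec t y); try discriminate; lra. Qed.

Lemma iter_S (f : R -> R) k y : Nat.iter (S k) f y = f (Nat.iter k f y).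
Proof. reflexivity. Qed.

Lemma orbf_S g0 g1 t z n : orbf g0 g1 t z (S n) =
  (if Rle_dec t (orbf g0 g1 t z n) then g1 (orbf g0 g1 t z n) else g0 (orbf g0 g1 t z n)).
Proof. reflexivity. Qed.

Lemma blockA g0 g1 s t u p : sys g0 g1 s t u -> (1 <= p)%nat ->
  (forall z, s <= z < g1 u -> forall j, (j < p)%nat -> Nat.iter j g0 z < t) ->
  (forall z, s <= z <= g1 u -> Nat.iter p g0 z < t -> t <= Nat.iter (S p) g0 z) ->
  forall z, s <= z < g1 u ->
  let cz := cd t (Nat.iter p g0 z) in
  (forall i, (i < length (blkL p cz))%nat -> cd t (orbf g0 g1 t z i) = nth i (blkL p cz) false) /\
  (s <= orbf g0 g1 t z (length (blkL p cz)) < g1 u) /\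
  orbf g0 g1 t z (length (blkL p cz)) = (if cz then g1 (Nat.iter p g0 z) else g1 (Nat.iter (S p) g0 z)).
Proof.
  intros Hs Hp A1 A2 z Hz cz.
  assert (Hz1 := A1 z Hz).
  assert (Hland : forall v, t <= v < u -> s <= g1 v < g1 u).
  { intros v Hv. split. apply (S2 _ _ _ _ _ Hs); lra. apply (S2s _ _ _ _ _ Hs); lra. }
  unfold cz. destruct (Rle_dec t (Nat.iter p g0 z)) as [Hs1|Hs1].
  - rewrite cd_true by auto. rewrite blkL_len.
    assert (Ho : forall i, (i <= p)%nat -> orbf g0 g1 t z i = Nat.iter i g0 z).
    { intros i Hi. apply orb_iterA. intros j Hj. apply Hz1. lia. }
    assert (Hu : Nat.iter p g0 z < u).
    { replace p with (S (p - 1)) by lia. apply (iterA_us _ _ _ _ _ Hs); [lra|].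
      intros j Hj. apply Hz1; lia. }
    assert (HL : orbf g0 g1 t z (S p) = g1 (Nat.iter p g0 z)).
    { rewrite orbf_S, Ho by lia. destruct (Rle_dec t (Nat.iter p g0 z)); [auto|lra]. }
    split; [|split].
    + intros i Hi. unfold blkL. rewrite Ho by lia.
      destruct (Nat.eq_dec i p). subst. rewrite cd_true, nth_rep_eq; auto.
      rewrite cd_false, nth_rep_lt; auto; try lia. apply Hz1; lia.
    + rewrite HL. apply Hland. lra.
    + exact HL.
  - apply Rnot_le_lt in Hs1. rewrite cd_false by auto. rewrite blkL_len.
    assert (Hz2 : forall j, (j <= p)%nat -> Nat.iter j g0 z < t).
    { intros j Hj. destruct (Nat.eq_dec j p). subst; auto. apply Hz1; lia. }
    assert (Ho : forall i, (i <= S p)%nat -> orbf g0 g1 t z i = Nat.iter i g0 z).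
    { intros i Hi. apply orb_iterA. intros j Hj. apply Hz2. lia. }
    assert (Hu : Nat.iter (S p) g0 z < u).
    { apply (iterA_us _ _ _ _ _ Hs); [lra|]. auto. }
    assert (Ht : t <= Nat.iter (S p) g0 z) by (apply A2; auto; lra).
    assert (HL : orbf g0 g1 t z (S (S p)) = g1 (Nat.iter (S p) g0 z)).
    { rewrite orbf_S, Ho by lia. destruct (Rle_dec t (Nat.iter (S p) g0 z)); [auto|lra]. }
    split; [|split].
    + intros i Hi. unfold blkL. rewrite Ho by lia.
      destruct (Nat.eq_dec i (S p)). subst. rewrite cd_true, nth_rep_eq; auto.
      rewrite cd_false, nth_rep_lt; auto; try lia. apply Hz2; lia.
    + rewrite HL. apply Hland. lra.
    + exact HL.
Qed.

Lemma stepA g0 g1 s t u pi : sys g0 g1 s t u -> g1 u <= t ->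
  (forall g0' g1' s' t' u' pi', sys g0' g1' s' t' u' ->
     mingen pi' (fun n => cd t' (orbf g0' g1' t' s' n)) -> (length pi' < length pi)%nat -> valid pi') ->
  mingen pi (fun n => cd t (orbf g0 g1 t s n)) -> valid pi.
Proof.
  intros Hs Hc IH Hm. pose proof Hs as (Hst & Htu & M0 & M1 & E0 & E1).
  destruct (caseA_facts _ _ _ _ _ Hs Hc) as (p & Hp & A1 & A1c & A2 & A3).
  set (cpf := fun z => cd t (Nat.iter p g0 z)).
  set (D := fun z => s <= z < g1 u).
  assert (HsD : D s). { unfold D. destruct (M1 t u); lra. }
  assert (HB : forall z, D z -> (forall i, (i < length (blkL p (cpf z)))%nat ->
       cd t (orbf g0 g1 t z i) = nth i (blkL p (cpf z)) false) /\
       D (orbf g0 g1 t z (length (blkL p (cpf z))))).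
  { intros z Hz. destruct (blockA _ _ _ _ _ p Hs Hp A1 A2 z Hz) as (X & Y & _). split; auto. }
  destruct (block_gen (orbf g0 g1 t) (cd t) (blkL p) cpf D s (orbf_shift g0 g1 t) (fun z => eq_refl) HsD HB)
    as [Hzs Hc2].
  set (zs := zsq (orbf g0 g1 t) (fun z => length (blkL p (cpf z))) s) in *.
  set (c' := fun j => cpf (zs j)) in *.
  destruct (comb (blkL p) (fun n => cd t (orbf g0 g1 t s n)) c' pi) as (pi' & Hm' & Hlen & Epi).
  - intros b. rewrite blkL_len. destruct b; lia.
  - exact Hc2.
  - exists p. apply (L_dec p (fun n => cd t (orbf g0 g1 t s n)) c'). exact Hc2.
  - apply (L_bound p (fun n => cd t (orbf g0 g1 t s n)) c'). exact Hc2. destruct A3 as [A3|A3]; [left|right].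
    + unfold c', cpf. apply cd_false. exact A3.
    + intros j. unfold c', cpf. apply cd_true. apply A3. destruct (Hzs j) as [_ Dj]. unfold D in Dj; lra.
  - exact Hm.
  - rewrite Epi, <- Lmorph_eq. apply validL; auto.
    destruct (classic (forall j, c' j = c' 0%nat)) as [Hcst|Hncst].
    + eapply valid_len1; [exact Hm'| apply const_gen; auto].
    + apply not_all_ex_not in Hncst. destruct Hncst as [j0 Hj0].
      assert (Hz12 : exists z1 z2, D z1 /\ D z2 /\ t <= Nat.iter p g0 z1 /\ Nat.iter p g0 z2 < t).
      { destruct (Hzs 0%nat) as [_ D0]. destruct (Hzs j0) as [_ Dj].
        unfold c', cpf in Hj0.
        destruct (cd t (Nat.iter p g0 (zs 0%nat))) eqn:Ea, (cd t (Nat.iter p g0 (zs j0))) eqn:Eb; try congruence.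
        - exists (zs 0%nat), (zs j0). apply cd_eq_true in Ea; apply cd_eq_false in Eb. auto.
        - exists (zs j0), (zs 0%nat). apply cd_eq_true in Eb; apply cd_eq_false in Ea. auto. }
      destruct Hz12 as (z1 & z2 & D1 & D2 & H1 & H2).
      assert (Hps : Nat.iter p g0 s < t).
      { destruct (iterA _ _ _ _ _ Hs p s z2 (Rle_refl _) (proj1 D2)) as (X & _).
        { intros j Hj. left. apply A1; auto. } lra. }
      assert (A1' := A1c Hps).
      assert (Hmon : forall x y, s <= x -> x <= y -> y <= g1 u ->
         Nat.iter p g0 x <= Nat.iter p g0 y /\ Nat.iter p g0 y - Nat.iter p g0 x <= y - x /\
         (x < y -> Nat.iter p g0 x < Nat.iter p g0 y)).
      { intros x y Hx Hxy Hy. destruct (iterA _ _ _ _ _ Hs p x y Hx Hxy) as (X1 & X2 & _ & X4).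
        { intros j Hj. left. apply A1'; auto; lra. } auto. }
      assert (Hz21 : z2 < z1).
      { destruct (Rlt_le_dec z2 z1); auto. destruct (Hmon z1 z2) as [X _]; unfold D in *; lra. }
      destruct (ivt_lip (Nat.iter p g0) z2 z1 t Hz21) as (t' & Ht' & Et').
      { intros x y Hx Hxy Hy. destruct (Hmon x y) as (X1 & X2 & _); unfold D in *; lra. }
      { auto. } { auto. }
      assert (Hcp : forall z, s <= z <= g1 u -> cpf z = cd t' z).
      { intros z Hz. unfold cpf. destruct (Rle_dec t' z).
        - rewrite !cd_true; auto. destruct (Hmon t' z) as [X _]; unfold D in *; lra.
        - rewrite !cd_false; try lra. destruct (Hmon z t') as (_ & _ & X); unfold D in *; try lra. }
      set (g0' := fun z => g1 (Nat.iter (S p) g0 z)).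
      set (g1' := fun z => g1 (Nat.iter p g0 z)).
      assert (Hs' : sys g0' g1' s t' (g1 u)).
      { unfold sys. split; [unfold D in *; lra|]. split; [unfold D in *; lra|].
        split; [|split; [|split]].
        - intros y z Hy Hyz Hz. unfold g0'.
          assert (Hzt : Nat.iter p g0 z <= t) by (destruct (Hmon z t') as [X _]; unfold D in *; lra).
          assert (Hyt : Nat.iter p g0 y <= t) by (destruct (Hmon y t') as [X _]; unfold D in *; lra).
          destruct (iterA _ _ _ _ _ Hs (S p) y z Hy (Rlt_le _ _ Hyz)) as (X1 & X2 & _ & X4).
          { intros j Hj. destruct (Nat.eq_dec j p). subst; auto. left; apply A1'; [unfold D in *; lra| lia]. }
          assert (Hya : t <= Nat.iter (S p) g0 y).
          { destruct (Req_dec (Nat.iter p g0 y) t) as [E|E]. rewrite iter_S, E, E0. lra.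
            apply A2; [unfold D in *; lra| lra]. }
          assert (Hzb : Nat.iter (S p) g0 z <= u).
          { apply (iterA_u _ _ _ _ _ Hs); [lra|]. intros j Hj. destruct (Nat.eq_dec j p). subst; auto.
            left; apply A1'; [unfold D in *; lra| lia]. }
          specialize (X4 Hyz). destruct (M1 (Nat.iter (S p) g0 y) (Nat.iter (S p) g0 z)); lra.
        - intros y z Hy Hyz Hz. unfold g1'.
          destruct (Hmon t' y) as [X _]; try (unfold D in *; lra).
          destruct (Hmon y z) as (Y1 & Y2 & Y3); try (unfold D in *; lra).
          assert (Hzb : Nat.iter p g0 z <= u).
          { replace p with (S (p-1)) by lia. apply (iterA_u _ _ _ _ _ Hs); [unfold D in *; lra|].
            intros j Hj. left. apply A1'; [unfold D in *; lra| lia]. }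
          specialize (Y3 Hyz). destruct (M1 (Nat.iter p g0 y) (Nat.iter p g0 z)); lra.
        - unfold g0'. rewrite iter_S, Et', E0. reflexivity.
        - unfold g1'. rewrite Et', E1. reflexivity. }
      assert (Horb : forall n, zs n = orbf g0' g1' t' s n).
      { induction n. reflexivity.
        change (zs (S n)) with (orbf g0 g1 t (zs n) (length (blkL p (cpf (zs n))))).
        destruct (Hzs n) as [_ Dn].
        destruct (blockA _ _ _ _ _ p Hs Hp A1 A2 (zs n) Dn) as (_ & _ & HL).
        unfold cpf in *. rewrite HL. rewrite orbf_S, <- IHn.
        rewrite (Hcp (zs n)) by (unfold D in Dn; lra).
        unfold cd. destruct (Rle_dec t' (zs n)); reflexivity. }
      apply (IH g0' g1' s t' (g1 u) pi' Hs'); [| lia].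
      eapply mingen_ext; [| exact Hm']. intros n. unfold c'.
      rewrite Hcp by (destruct (Hzs n) as [_ Dn]; unfold D in Dn; lra). rewrite Horb. reflexivity.
Qed.

Lemma blockB g0 g1 s t u p : sys g0 g1 s t u -> (1 <= p)%nat ->
  (forall z, s <= z <= t -> forall j, (j < p)%nat -> t <= Nat.iter j g1 (g0 z)) ->
  (forall z, s <= z < t -> t <= Nat.iter p g1 (g0 z) -> g1 (Nat.iter p g1 (g0 z)) < t) ->
  forall z, s <= z < t ->
  let cz := cd t (Nat.iter p g1 (g0 z)) in
  (forall i, (i < length (blkR p cz))%nat -> cd t (orbf g0 g1 t z i) = nth i (blkR p cz) false) /\
  (s <= orbf g0 g1 t z (length (blkR p cz)) < t) /\
  orbf g0 g1 t z (length (blkR p cz)) = (if cz then g1 (Nat.iter p g1 (g0 z)) else Nat.iter p g1 (g0 z)).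
Proof.
  intros Hs Hp B1 B2 z Hz cz.
  assert (Hz1 := B1 z (conj (proj1 Hz) (Rlt_le _ _ (proj2 Hz)))).
  assert (Hgz : g0 z <= u) by (destruct (S1 _ _ _ _ _ Hs z); lra).
  assert (HGs : s <= Nat.iter p g1 (g0 z)).
  { replace p with (S (p - 1)) by lia. apply (iterB_s _ _ _ _ _ Hs); auto.
    intros j Hj. apply Hz1. lia. }
  assert (HGu : Nat.iter p g1 (g0 z) <= u).
  { destruct (iterB _ _ _ _ _ Hs p (g0 z) (g0 z) (Rle_refl _) Hgz) as (_ & _ & X & _); auto. }
  assert (Ho : forall i, (i <= p)%nat -> orbf g0 g1 t z (S i) = Nat.iter i g1 (g0 z)).
  { intros i Hi. apply orb_iterB; [lra|]. intros j Hj. apply Hz1. lia. }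
  assert (H0 : cd t (orbf g0 g1 t z 0) = false) by (simpl; apply cd_false; lra).
  unfold cz. destruct (Rle_dec t (Nat.iter p g1 (g0 z))) as [Hs1|Hs1].
  - rewrite cd_true by auto. rewrite blkR_len.
    assert (HL : orbf g0 g1 t z (S (S p)) = g1 (Nat.iter p g1 (g0 z))).
    { rewrite orbf_S, Ho by lia. destruct (Rle_dec t (Nat.iter p g1 (g0 z))); [auto|lra]. }
    split; [|split].
    + intros i Hi. destruct i. rewrite H0. reflexivity.
      rewrite Ho by lia. unfold blkR.
      change (nth (S i) (false :: List.repeat true (S p)) false) with (nth i (List.repeat true (S p)) false).
      rewrite nth_repeat_lt by lia. apply cd_true.
      destruct (Nat.eq_dec i p). subst; auto. apply Hz1; lia.
    + rewrite HL. split. apply (S2 _ _ _ _ _ Hs); lra. apply B2; auto.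
    + exact HL.
  - apply Rnot_le_lt in Hs1. rewrite cd_false by auto. rewrite blkR_len.
    split; [|split].
    + intros i Hi. destruct i. rewrite H0. reflexivity.
      rewrite Ho by lia. unfold blkR.
      change (nth (S i) (false :: List.repeat true p) false) with (nth i (List.repeat true p) false).
      rewrite nth_repeat_lt by lia. apply cd_true. apply Hz1; lia.
    + rewrite Ho by lia. lra.
    + apply Ho. lia.
Qed.

Lemma stepB g0 g1 s t u pi : sys g0 g1 s t u -> t < g1 u ->
  (forall g0' g1' s' t' u' pi', sys g0' g1' s' t' u' ->
     mingen pi' (fun n => cd t' (orbf g0' g1' t' s' n)) -> (length pi' < length pi)%nat -> valid pi') ->
  mingen pi (fun n => cd t (orbf g0 g1 t s n)) -> valid pi.
Proof.
  intros Hs Hc IH Hm. pose proof Hs as (Hst & Htu & M0 & M1 & E0 & E1).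
  destruct (caseB_facts _ _ _ _ _ Hs Hc) as (p & Hp & B0 & B1 & B2 & B3).
  set (G := fun z => Nat.iter p g1 (g0 z)).
  set (cpf := fun z => cd t (G z)).
  set (D := fun z => s <= z < t).
  assert (HsD : D s). { unfold D. lra. }
  assert (HB : forall z, D z -> (forall i, (i < length (blkR p (cpf z)))%nat ->
       cd t (orbf g0 g1 t z i) = nth i (blkR p (cpf z)) false) /\
       D (orbf g0 g1 t z (length (blkR p (cpf z))))).
  { intros z Hz. destruct (blockB _ _ _ _ _ p Hs Hp B1 B2 z Hz) as (X & Y & _). split; auto. }
  destruct (block_gen (orbf g0 g1 t) (cd t) (blkR p) cpf D s (orbf_shift g0 g1 t) (fun z => eq_refl) HsD HB)
    as [Hzs Hc2].
  set (zs := zsq (orbf g0 g1 t) (fun z => length (blkR p (cpf z))) s) in *.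
  set (c' := fun j => cpf (zs j)) in *.
  destruct (comb (blkR p) (fun n => cd t (orbf g0 g1 t s n)) c' pi) as (pi' & Hm' & Hlen & Epi).
  - intros b. rewrite blkR_len. destruct b; lia.
  - exact Hc2.
  - exists (S p). apply (R_dec p (fun n => cd t (orbf g0 g1 t s n)) c'). exact Hc2.
  - apply (R_bound p (fun n => cd t (orbf g0 g1 t s n)) c'). exact Hc2.
  - exact Hm.
  - rewrite Epi, <- Rmorph_eq. apply validR; auto.
    destruct (classic (forall j, c' j = c' 0%nat)) as [Hcst|Hncst].
    + eapply valid_len1; [exact Hm'| apply const_gen; auto].
    + apply not_all_ex_not in Hncst. destruct Hncst as [j0 Hj0].
      assert (Hz12 : exists z1 z2, D z1 /\ D z2 /\ t <= G z1 /\ G z2 < t).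
      { destruct (Hzs 0%nat) as [_ D0]. destruct (Hzs j0) as [_ Dj].
        unfold c', cpf in Hj0.
        destruct (cd t (G (zs 0%nat))) eqn:Ea, (cd t (G (zs j0))) eqn:Eb; try congruence.
        - exists (zs 0%nat), (zs j0). apply cd_eq_true in Ea; apply cd_eq_false in Eb. auto.
        - exists (zs j0), (zs 0%nat). apply cd_eq_true in Eb; apply cd_eq_false in Ea. auto. }
      destruct Hz12 as (z1 & z2 & D1 & D2 & H1 & H2).
      assert (Hmon : forall x y, s <= x -> x <= y -> y <= t ->
         G x <= G y /\ G y - G x <= y - x /\ (x < y -> G x < G y /\ G y - G x < y - x) /\ G y <= u).
      { intros x y Hx Hxy Hy.
        assert (Hg : g0 x <= g0 y /\ g0 y - g0 x <= y - x /\ (x < y -> g0 x < g0 y /\ g0 y - g0 x < y - x)).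
        { destruct (Req_dec x y). subst; lra. destruct (M0 x y); try lra. }
        assert (Hgy : g0 y <= u) by (destruct (S1 _ _ _ _ _ Hs y); lra).
        destruct (iterB _ _ _ _ _ Hs p (g0 x) (g0 y) (proj1 Hg) Hgy) as (X1 & X2 & X3 & X4).
        { intros j Hj. apply B1; [lra| auto]. }
        unfold G. split; [lra|]. split; [lra|]. split; [|lra].
        intros Hxy'. destruct Hg as (_ & _ & Hg). specialize (Hg Hxy'). specialize (X4 (proj1 Hg)). lra. }
      assert (Hz21 : z2 < z1).
      { destruct (Rlt_le_dec z2 z1); auto. destruct (Hmon z1 z2) as [X _]; unfold D in *; lra. }
      destruct (ivt_lip G z2 z1 t Hz21) as (t' & Ht' & Et').
      { intros x y Hx Hxy Hy. destruct (Hmon x y) as (X1 & X2 & _); unfold D in *; lra. }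
      { auto. } { auto. }
      assert (Hcp : forall z, s <= z <= t -> cpf z = cd t' z).
      { intros z Hz. unfold cpf. destruct (Rle_dec t' z).
        - rewrite !cd_true; auto. destruct (Hmon t' z) as [X _]; unfold D in *; lra.
        - rewrite !cd_false; try lra. destruct (Hmon z t') as (_ & _ & X & _); unfold D in *; try lra. }
      set (g1' := fun z => g1 (G z)).
      assert (Hs' : sys G g1' s t' t).
      { unfold sys. split; [unfold D in *; lra|]. split; [unfold D in *; lra|].
        split; [|split; [|split]].
        - intros y z Hy Hyz Hz. destruct (Hmon y z) as (_ & _ & X & _); unfold D in *; try lra; auto.
        - intros y z Hy Hyz Hz. unfold g1'.
          destruct (Hmon t' y) as [X _]; try (unfold D in *; lra).
          destruct (Hmon y z) as (Y1 & Y2 & Y3 & Y4); try (unfold D in *; lra).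
          specialize (Y3 Hyz). destruct (M1 (G y) (G z)); lra.
        - exact Et'.
        - unfold g1'. rewrite Et', E1. reflexivity. }
      assert (Horb : forall n, zs n = orbf G g1' t' s n).
      { induction n. reflexivity.
        change (zs (S n)) with (orbf g0 g1 t (zs n) (length (blkR p (cpf (zs n))))).
        destruct (Hzs n) as [_ Dn].
        destruct (blockB _ _ _ _ _ p Hs Hp B1 B2 (zs n) Dn) as (_ & _ & HL).
        unfold cpf, G in *. rewrite HL. rewrite orbf_S, <- IHn.
        rewrite (Hcp (zs n)) by (unfold D in Dn; lra).
        unfold cd. destruct (Rle_dec t' (zs n)); reflexivity. }
      apply (IH G g1' s t' t pi' Hs'); [| lia].
      eapply mingen_ext; [| exact Hm']. intros n. unfold c'.
      rewrite Hcp by (destruct (Hzs n) as [_ Dn]; unfold D in Dn; lra). rewrite Horb. reflexivity.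
Qed.

Lemma sys_valid : forall N g0 g1 s t u pi, sys g0 g1 s t u ->
  mingen pi (fun n => cd t (orbf g0 g1 t s n)) -> (length pi <= N)%nat -> valid pi.
Proof.
  induction N; intros g0 g1 s t u pi Hs Hm Hl.
  - destruct Hm as [G _]. pose proof (genc_len _ _ G). lia.
  - assert (IH' : forall g0' g1' s' t' u' pi', sys g0' g1' s' t' u' ->
       mingen pi' (fun n => cd t' (orbf g0' g1' t' s' n)) -> (length pi' < length pi)%nat -> valid pi').
    { intros. eapply IHN; eauto. lia. }
    destruct (Rle_lt_dec (g1 u) t).
    + eapply stepA; eauto.
    + eapply stepB; eauto.
Qed.

Lemma orbit_orbf phi0 phi1 x : forall n, orbit phi0 phi1 x n = orbf phi0 phi1 x (phi1 x) n.
Proof. induction n; simpl; auto. rewrite IHn. reflexivity. Qed.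

Lemma len1_valid pi (P : list bool -> Prop) b :
  pi <> nil -> P [b] -> (forall pi', P pi' -> (length pi <= length pi')%nat) -> valid pi.
Proof.
  intros Hn Hb Hm. specialize (Hm _ Hb). simpl in Hm.
  destruct pi as [|a [|a' r]]; simpl in *; try congruence; try lia.
  destruct a; constructor.
Qed.

Theorem mainTheorem8 (I : R -> Prop) (phi0 phi1 : R -> R) (x : R) (pi : list bool) :
  is_interval I ->
  A2 I phi0 phi1 ->
  I x ->
  threshold_word phi0 phi1 x pi ->
  valid pi.
Proof.
  intros HI (Hcl & Hmono & y0 & y1 & Iy0 & Iy1 & F0 & F1 & Hy) Hx [[Hne Hgen] Hmin].
  assert (M0 : forall y z, I y -> I z -> y < z -> phi0 y < phi0 z /\ phi0 z - phi0 y < z - y)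
    by (intros; apply (Hmono false); auto).
  assert (M1 : forall y z, I y -> I z -> y < z -> phi1 y < phi1 z /\ phi1 z - phi1 y < z - y)
    by (intros; apply (Hmono true); auto).
  assert (I0 : forall y, I y -> I (phi0 y)) by (intros; apply (Hcl false); auto).
  assert (I1 : forall y, I y -> I (phi1 y)) by (intros; apply (Hcl true); auto).
  assert (Iorb : forall n, I (orbit phi0 phi1 x n)).
  { induction n; simpl; auto. destruct (Rle_dec x (orbit phi0 phi1 x n)); auto. }
  destruct (Rle_lt_dec x y1) as [C1|C1].
  - (* x <= y1 : always letter 1 *)
    assert (Hup : forall y, I y -> x <= y -> x <= phi1 y).
    { intros y Iy Hy'. destruct (Rtotal_order y y1) as [L|[E|L]].
      - destruct (M1 y y1); auto; lra.
      - subst. lra.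
      - destruct (M1 y1 y); auto; lra. }
    assert (Hall : forall n, x <= orbit phi0 phi1 x n).
    { induction n; simpl. apply Hup; auto; lra.
      destruct (Rle_dec x (orbit phi0 phi1 x n)); [|lra]. apply Hup; auto. }
    apply (len1_valid pi (generates_orbit phi0 phi1 x) true); auto.
    split; [discriminate|]. intros n. unfold omega_letter. simpl length. rewrite Nat.mod_1_r.
    simpl. destruct (Rle_dec x (orbit phi0 phi1 x n)); [reflexivity|]. specialize (Hall n). lra.
  - destruct (Rle_lt_dec y0 x) as [C2|C2].
    + (* x >= y0 : always letter 0 *)
      assert (Hdown : forall y, I y -> y < x -> phi0 y < x).
      { intros y Iy Hy'. destruct (Rtotal_order y y0) as [L|[E|L]].
        - destruct (M0 y y0); auto; lra.
        - subst. lra.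
        - destruct (M0 y0 y); auto; lra. }
      assert (Hall : forall n, orbit phi0 phi1 x n < x).
      { induction n; simpl. destruct (M1 y1 x); auto; lra.
        destruct (Rle_dec x (orbit phi0 phi1 x n)); [lra|]. apply Hdown; auto. }
      apply (len1_valid pi (generates_orbit phi0 phi1 x) false); auto.
      split; [discriminate|]. intros n. unfold omega_letter. simpl length. rewrite Nat.mod_1_r.
      simpl. destruct (Rle_dec x (orbit phi0 phi1 x n)); [|reflexivity]. specialize (Hall n). lra.
    +
      set (s := phi1 x). set (u := phi0 x).
      assert (Is : I s) by (unfold s; auto). assert (Iu : I u) by (unfold u; auto).
      assert (Hsx : y1 < s /\ s < x) by (destruct (M1 y1 x); unfold s; auto; lra).
      assert (Hxu : x < u /\ u < y0) by (destruct (M0 x y0); unfold u; auto; lra).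
      assert (Hs : sys phi0 phi1 s x u).
      { split; [lra|]. split; [lra|]. split; [|split; [|split]].
        - intros y z Hy1 Hyz Hz. apply M0; [apply (HI s y x); auto; lra | apply (HI s z x); auto; lra | lra].
        - intros y z Hy1 Hyz Hz. apply M1; [apply (HI x y u); auto; lra | apply (HI x z u); auto; lra | lra].
        - reflexivity.
        - reflexivity. }
      set (c := fun n => cd x (orbf phi0 phi1 x s n)).
      assert (Hb : forall n, s <= orbit phi0 phi1 x n < u).
      { intros n. rewrite orbit_orbf. fold s. apply (orb_bound _ _ _ _ _ Hs). lra. }
      assert (Hstep : forall n, orbit phi0 phi1 x (S n) =
                phik phi0 phi1 (cd x (orbit phi0 phi1 x n)) (orbit phi0 phi1 x n)).
      { intros n. simpl. unfold cd. destruct (Rle_dec x (orbit phi0 phi1 x n)); reflexivity. }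
      assert (Hm : mingen pi c).
      { split.
        - split; auto. intros n. unfold c. unfold s. rewrite <- orbit_orbf.
          specialize (Hgen n). rewrite Hstep in Hgen. specialize (Hb n).
          set (y := orbit phi0 phi1 x n) in *.
          assert (Iy : I y) by apply Iorb.
          assert (P0 : y < phi0 y) by (destruct (M0 y y0); auto; lra).
          assert (P1 : phi1 y < y) by (destruct (M1 y1 y); auto; lra).
          destruct (cd x y), (omega_letter pi n); simpl in Hgen; auto; lra.
        - intros pi' [Hne' Hg']. apply Hmin. split; auto. intros n.
          rewrite Hstep. f_equal. rewrite <- Hg'. unfold c. rewrite orbit_orbf. fold s. reflexivity. }
      exact (sys_valid (length pi) phi0 phi1 s x u pi Hs Hm (Nat.le_refl _)).
Qed.
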